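(* Consider M-FACTORING, and let $n\geqslant 2$, where each option is a non-trivial disjunctive sum of a factoring of $n$. Then $\mathcal{SG}(n)=\Omega(n)-1$. If no two distinct components may contain the same prime number, then $\mathcal{SG}(n)=\omega(n)-1$.
   Context: M-FACTORING is the impartial normal-play heap game where a move from a heap $n$ replaces it by the disjunctive sum $a_1+\cdots+a_k$ of a factorization $n=a_1a_2\cdots a_k$ with $k\ge2$ and $1<a_1\le\cdots\le a_k$. $\mathcal{SG}$ denotes the Sprague-Grundy value (mex rule, nim-sum). $\Omega(n)$ counts prime factors with multiplicity, $\omega(n)$ counts distinct prime factors. *)

(* Defs.v *)
From mathcomp Require Import all_boot.
Set Implicit Arguments. Unset Strict Implicit. Unset Printing Implicit Defensive.

Definition is_factorization (n : nat) (s : seq nat) : bool :=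
  [&& 2 <= size s, all (fun a => 1 < a) s, sorted leq s & \prod_(a <- s) a == n].

Definition is_coprime_factorization (n : nat) (s : seq nat) : bool :=
  is_factorization n s && pairwise coprime s.

(* All lists of length <= k with entries from D (a finite universe containing
   every factorization of n when k = n and D = divisors n). *)
Fixpoint seqs_upto (k : nat) (D : seq nat) : seq (seq nat) :=
  if k is k'.+1 then [::] :: [seq d :: s | d <- D, s <- seqs_upto k' D]
  else [:: [::]].

Definition options (P : nat -> seq nat -> bool) (n : nat) : seq (seq nat) :=
  [seq s <- undup (seqs_upto n (divisors n)) | P n s].

Definition nimsum (s : seq nat) : nat := foldr Nat.lxor 0 s.

Definition mex (s : seq nat) : nat :=
  find (fun m => m \notin s) (iota 0 (size s).+1).

(* Sprague-Grundy value by recursion with fuel; every component of an option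
   from n is < n, so fuel n is enough. *)
Fixpoint sg_fuel (P : nat -> seq nat -> bool) (fuel n : nat) : nat :=
  if fuel is f.+1 then mex [seq nimsum (map (sg_fuel P f) s) | s <- options P n]
  else 0.

Definition SG (P : nat -> seq nat -> bool) (n : nat) : nat := sg_fuel P n n.

Definition bigOmega (n : nat) : nat := \sum_(p <- primes n) logn p n.
Definition smallomega (n : nat) : nat := size (primes n).

(* Main.v *)
From Stdlib Require Import PeanoNat.
From HB Require Import structures.
Require Import Defs.
From mathcomp Require Import all_boot.

Lemma lxor_le a b : Nat.lxor a b <= a + b.
Proof.
have e1 : forall x y, x = Nat.ldiff x y + Nat.land x y.
  move=> x y; rewrite -plusE Nat.add_nocarry_lxor.
    apply: Nat.bits_inj => i.
    by rewrite Nat.lxor_spec Nat.ldiff_spec Nat.land_spec;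
       case: (Nat.testbit x i); case: (Nat.testbit y i).
  apply: Nat.bits_inj => i.
  by rewrite Nat.land_spec Nat.ldiff_spec Nat.land_spec Nat.bits_0;
     case: (Nat.testbit x i); case: (Nat.testbit y i).
have -> : Nat.lxor a b = Nat.ldiff a b + Nat.ldiff b a.
  rewrite -plusE Nat.add_nocarry_lxor.
    apply: Nat.bits_inj => i.
    by rewrite !Nat.lxor_spec !Nat.ldiff_spec;
       case: (Nat.testbit a i); case: (Nat.testbit b i).
  apply: Nat.bits_inj => i.
  by rewrite Nat.land_spec !Nat.ldiff_spec Nat.bits_0;
     case: (Nat.testbit a i); case: (Nat.testbit b i).
apply: leq_add.
  by apply: leq_trans (leq_addr (Nat.land a b) _) _; rewrite -e1.
by apply: leq_trans (leq_addr (Nat.land b a) _) _; rewrite -e1.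
Qed.

Lemma nimsum_le s : nimsum s <= sumn s.
Proof.
elim: s => [//|x s IH] /=.
apply: leq_trans (lxor_le _ _) _.
by rewrite leq_add2l.
Qed.

HB.instance Definition _ := Monoid.isComLaw.Build nat 0 Nat.lxor
  (fun a b c => esym (Nat.lxor_assoc a b c)) Nat.lxor_comm Nat.lxor_0_l.

Lemma nimsum_perm s t : perm_eq s t -> nimsum s = nimsum t.
Proof. by move=> pst; rewrite /nimsum !foldrE; apply: perm_big. Qed.

Lemma nimsum0 s : all (fun x => x == 0) s -> nimsum s = 0.
Proof. by elim: s => [//|x s IH] /= /andP[/eqP -> /IH ->]. Qed.

Lemma mexP s m : m \notin s -> (forall j, j < m -> j \in s) -> mex s = m.
Proof.
move=> nm hj.
have msz : m <= size s.
  have := @uniq_leq_size _ (iota 0 m) s (iota_uniq 0 m).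
  rewrite size_iota; apply => x; rewrite mem_iota add0n; exact: hj.
rewrite /mex.
set p := (fun m0 => m0 \notin s).
have hp : has p (iota 0 (size s).+1).
  by apply/hasP; exists m => //; rewrite mem_iota add0n ltnS.
have := nth_find 0 hp; have := find_size p (iota 0 (size s).+1).
rewrite has_find size_iota in hp.
rewrite nth_iota // add0n /p => _ hf.
case: (ltngtP (find p (iota 0 (size s).+1)) m) => // h.
- by rewrite hj in hf.
- have := before_find 0 h; rewrite nth_iota ?add0n /p ?nm //.
Qed.

Lemma seqs_upto_mem k D s : size s <= k -> all (mem D) s -> s \in seqs_upto k D.
Proof.
elim: k s => [|k IH] [|d s] //=.
rewrite ltnS => hs /andP[hd ha].
rewrite in_cons /=.
by apply: (allpairs_f (fun d s => d :: s)) => //; apply: IH.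
Qed.

Lemma prod_ge_exp s : all (fun a => 1 < a) s -> 2 ^ size s <= \prod_(a <- s) a.
Proof.
elim: s => [|a s IH] /=; first by rewrite big_nil.
move=> /andP[ha hs]; rewrite big_cons expnS.
by apply: leq_mul => //; apply: IH.
Qed.

Lemma fact_size n s : is_factorization n s -> size s <= n.
Proof.
case/and4P=> _ ha _ /eqP <-.
apply: leq_trans _ (prod_ge_exp _ ha); apply: ltnW; exact: ltn_expl.
Qed.

Lemma fact_dvd n s a : is_factorization n s -> a \in s -> a %| n.
Proof.
case/and4P=> _ _ _ /eqP <- ha.
by rewrite (big_rem a ha) /=; apply: dvdn_mulr.
Qed.

Lemma fact_comp n s a : is_factorization n s -> a \in s -> 1 < a < n.
Proof.
move=> hf ha; case/and4P: hf => hsz hall _ /eqP hp.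
have a1 : 1 < a by move/allP: hall; apply.
rewrite a1 /=.
move: hp; rewrite (big_rem a ha) /= => <-.
have hr : all (fun a => 1 < a) (rem a s).
  by apply/allP => x /mem_rem hx; move/allP: hall; apply.
have := prod_ge_exp _ hr.
rewrite size_rem // => h.
have h2 : 2 <= \prod_(y <- rem a s) y.
  apply: leq_trans h; rewrite -{1}(expn1 2) leq_exp2l //.
  by rewrite -ltnS prednK // ltnW.
apply: leq_trans (leq_mul (leqnn a) h2); rewrite muln2 -addnn.
by rewrite -addn1 leq_add2l ltnW.
Qed.

Lemma options_mem (P : nat -> seq nat -> bool) n s : (forall n s, P n s -> is_factorization n s) ->
  0 < n -> (s \in options P n) = P n s.
Proof.
move=> HP n0; rewrite /options mem_filter.
case hP: (P n s) => //=.
rewrite mem_undup; apply: seqs_upto_mem; first exact: fact_size _ _ (HP _ _ hP).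
apply/allP => a ha; rewrite /= -dvdn_divisors //.
exact: fact_dvd _ _ _ (HP _ _ hP) ha.
Qed.

Section Generic.
Variable P : nat -> seq nat -> bool.
Variable h : nat -> nat.
Hypothesis HP : forall n s, P n s -> is_factorization n s.
Hypothesis H2 : forall n s, 0 < n -> P n s -> sumn (map h s) < h n.
Hypothesis H3 : forall n j, 0 < n -> j < h n ->
  exists s, P n s /\ nimsum (map h s) = j.

Lemma sg_fuel_eq N : forall m f, m <= N -> 0 < m -> m <= f -> sg_fuel P f m = h m.
Proof.
elim: N => [|N IH] m f; first by case: m.
move=> mN m0 mf.
case: f mf => [|f] mf; first by case: m m0 mf mN.
rewrite /=.
have -> : [seq nimsum [seq sg_fuel P f i | i <- s] | s <- options P m]
        = [seq nimsum [seq h i | i <- s] | s <- options P m].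
  apply/eq_in_map => s; rewrite options_mem // => hs.
  congr nimsum; apply/eq_in_map => a ha.
  have /andP[a1 am] := fact_comp _ _ _ (HP _ _ hs) ha.
  apply: IH.
  - by rewrite -ltnS; apply: leq_trans mN.
  - exact: ltnW.
  - by rewrite -ltnS; apply: leq_trans mf.
apply: mexP.
  apply/negP => /mapP[s]; rewrite options_mem // => hs heq.
  have := leq_ltn_trans (nimsum_le _) (H2 _ _ m0 hs).
  by rewrite -heq ltnn.
move=> j jm; have [s [hs hj]] := H3 _ _ m0 jm.
apply/mapP; exists s => //; by rewrite options_mem.
Qed.

Lemma SG_eq n : 0 < n -> SG P n = h n.
Proof. move=> n0; exact: (sg_fuel_eq n n n (leqnn n) n0 (leqnn n)). Qed.
End Generic.
From mathcomp Require Import zify.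

Lemma pairwise_perm (T : eqType) (r : rel T) (s t : seq T) :
  symmetric r -> perm_eq s t -> pairwise r s -> pairwise r t.
Proof.
move=> rs; elim: s t => [|x s IH] t.
  by move=> /perm_size; case: t.
move=> pst; have xt : x \in t by rewrite -(perm_mem pst) mem_head.
case/splitPr: xt pst => t1 t2 pst.
have ps : perm_eq s (t1 ++ t2).
  rewrite -(perm_cons x); apply: perm_trans pst _.
  exact: (permEl (perm_catCA t1 [:: x] t2)).
rewrite pairwise_cons => /andP[ax pws].
have := IH _ ps pws; rewrite !pairwise_cat pairwise_cons allrel_consr.
case/and3P=> a12 p1 p2; rewrite a12 p1 p2 !andbT /=.
have memt : forall y, y \in t1 ++ t2 -> r x y.
  by move=> y; rewrite -(perm_mem ps); move/allP: ax; apply.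
apply/andP; split; apply/allP => y hy.
- by rewrite /= rs; apply: memt; rewrite mem_cat hy.
- by apply: memt; rewrite mem_cat hy orbT.
Qed.

Lemma build (P : nat -> seq nat -> bool) (f : nat -> nat) n j L :
  \prod_(x <- L) x = n -> size L = f n ->
  all (fun x => (1 < x) && (f x == 1)) L ->
  j < f n - 1 ->
  f (\prod_(x <- take j.+1 L) x) = j.+1 ->
  (forall s, perm_eq s (\prod_(x <- take j.+1 L) x :: drop j.+1 L) ->
     is_factorization n s -> P n s) ->
  exists s, P n s /\ nimsum (map (fun x => f x - 1) s) = j.
Proof.
move=> hprod hsize hall hj hfa hP.
set a := \prod_(x <- take j.+1 L) x in hfa hP.
set r := drop j.+1 L in hP.
have jL : j.+1 < size L by lia.
have ps : perm_eq (sort leq (a :: r)) (a :: r) by rewrite perm_sort.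
exists (sort leq (a :: r)); split.
  apply: hP => //; apply/and4P; split.
  - by rewrite (perm_size ps) /= size_drop; lia.
  - rewrite (perm_all _ ps) /=; apply/andP; split.
      have ht : all (fun a => 1 < a) (take j.+1 L).
        apply/allP => x /mem_take hx; move/allP: hall => /(_ x hx) /andP[]//.
      have := prod_ge_exp _ ht; rewrite size_take jL => h.
      apply: leq_trans h; rewrite -{1}(expn1 2) leq_exp2l //.
    apply/allP => x /mem_drop hx; move/allP: hall => /(_ x hx) /andP[]//.
  - apply: sort_sorted; exact: leq_total.
  - rewrite (perm_big _ ps) big_cons /a /r -big_cat cat_take_drop hprod //.
rewrite (nimsum_perm _ _ (perm_map _ ps)) /= hfa subSS subn0.
rewrite nimsum0 ?Nat.lxor_0_r // all_map.
apply/allP => x /mem_drop hx /=; move/allP: hall => /(_ x hx) /andP[_ /eqP hx1].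
by rewrite hx1.
Qed.

Lemma bigOmegaE n N : 0 < n -> n < N -> bigOmega n = \sum_(0 <= p < N) logn p n.
Proof.
move=> n0 nN.
have e : \sum_(0 <= p < N | p \in primes n) logn p n = \sum_(0 <= p < N) logn p n.
  rewrite big_mkcond; apply: eq_bigr => p _; case: ifPn => // hp.
  by move: hp; rewrite -logn_gt0 lt0n negbK => /eqP.
rewrite -e -big_filter /bigOmega; apply: perm_big; apply: uniq_perm.
- exact: primes_uniq.
- by apply: filter_uniq; apply: iota_uniq.
move=> p; rewrite mem_filter mem_iota add0n subn0.
case hp: (p \in primes n) => //=.
move: hp; rewrite mem_primes => /and3P[_ _ /(dvdn_leq n0) pn].
by rewrite (leq_ltn_trans pn nN).
Qed.

Lemma OmegaM a b : 0 < a -> 0 < b -> bigOmega (a * b) = bigOmega a + bigOmega b.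
Proof.
move=> a0 b0.
have ab0 : 0 < a * b by rewrite muln_gt0 a0.
have aN : a < (a * b).+1 by rewrite ltnS leq_pmulr.
have bN : b < (a * b).+1 by rewrite ltnS leq_pmull.
rewrite (bigOmegaE _ (a * b).+1 ab0 (ltnSn _)) (bigOmegaE _ _ a0 aN) (bigOmegaE _ _ b0 bN).
rewrite -big_split; apply: eq_bigr => p _; exact: lognM.
Qed.

Lemma Omega1 : bigOmega 1 = 0.
Proof.
rewrite /bigOmega; have -> : primes 1 = [::] by apply/eqP; rewrite primes_eq0.
by rewrite ?big_nil.
Qed.

Lemma Omega_prime p : prime p -> bigOmega p = 1.
Proof. by move=> pp; rewrite /bigOmega primes_prime // big_seq1 logn_prime // eqxx. Qed.

Lemma prod_pos s : all (fun a => 1 < a) s -> 0 < \prod_(x <- s) x.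
Proof. move=> h; apply: leq_trans (prod_ge_exp _ h); exact: expn_gt0. Qed.

Lemma Omega_prodgen s : all (fun a => 1 < a) s ->
  bigOmega (\prod_(x <- s) x) = sumn (map bigOmega s).
Proof.
elim: s => [|x s IH] /=; first by rewrite big_nil Omega1.
move=> /andP[x1 hs]; rewrite big_cons OmegaM ?IH //; first exact: ltnW.
exact: prod_pos.
Qed.

Lemma Omega_prod L : all prime L -> bigOmega (\prod_(x <- L) x) = size L.
Proof.
move=> hL; rewrite Omega_prodgen; last first.
  by apply/allP => x hx; apply: prime_gt1; move/allP: hL; apply.
elim: L hL => [|x L IH] //= /andP[px hL]; by rewrite Omega_prime // IH.
Qed.

Lemma prime_list n : 0 < n -> exists L, all prime L /\ \prod_(x <- L) x = n.
Proof.
elim: n {-2}n (leqnn n) => [|N IH] n nN n0; first by case: n nN n0.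
case: (ltnP 1 n) => n1; last first.
  have -> : n = 1 by lia.
  by exists [::]; rewrite big_nil.
set p := pdiv n.
have pp : prime p := pdiv_prime n1.
have pn : p %| n := pdiv_dvd n.
have [||L [hL hp]] := IH (n %/ p).
- rewrite -ltnS; apply: leq_trans nN; apply: ltn_Pdiv.
    exact: prime_gt1.
  exact: ltnW.
- by rewrite divn_gt0 ?prime_gt0 // dvdn_leq.
exists (p :: L); rewrite /= pp hL big_cons hp; split=> //.
by rewrite mulnC divnK.
Qed.

Lemma Omega_pos a : 1 < a -> 0 < bigOmega a.
Proof.
move=> a1; have [L [hL hp]] := prime_list a (ltnW a1).
rewrite -hp Omega_prod //; case: L hL hp => //; rewrite big_nil => _ h.
by rewrite -h in a1.
Qed.

Lemma sum_sub1 (g : nat -> nat) (s : seq nat) : (forall x, x \in s -> 0 < g x) ->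
  sumn (map (fun x => g x - 1) s) + size s = sumn (map g s).
Proof.
elim: s => [//|x s IH] hg /=.
have h1 := hg x (mem_head _ _).
have h2 : sumn [seq g x - 1 | x <- s] + size s = sumn [seq g i | i <- s].
  by apply: IH => y hy; apply: hg; rewrite in_cons hy orbT.
by rewrite -h2 addnS -addnA -addSn subn1 prednK.
Qed.

Lemma omegaM a b : 0 < a -> 0 < b -> coprime a b ->
  smallomega (a * b) = smallomega a + smallomega b.
Proof.
move=> a0 b0 cab; rewrite /smallomega -size_cat; apply: perm_size.
apply: uniq_perm.
- exact: primes_uniq.
- rewrite cat_uniq !primes_uniq andbT /=; apply/hasP => [[p pb pa]].
  move: pa pb; rewrite !mem_primes => /and3P[pp _ pa] /and3P[_ _ pb].
  have : p %| gcdn a b by rewrite dvdn_gcd pa pb.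
  move/eqP: cab => ->; rewrite dvdn1 => /eqP p1.
  by rewrite p1 in pp.
- by move=> p; rewrite mem_cat primesM.
Qed.

Lemma omega1 : smallomega 1 = 0.
Proof.
rewrite /smallomega; have -> : primes 1 = [::] by apply/eqP; rewrite primes_eq0.
by rewrite ?big_nil.
Qed.

Lemma coprime_prodl t y : (forall x, x \in t -> coprime x y) ->
  coprime (\prod_(x <- t) x) y.
Proof.
elim: t => [|x t IH] h; first by rewrite big_nil coprime1n.
rewrite big_cons coprimeMl h ?mem_head //=; apply: IH => z hz.
by apply: h; rewrite in_cons hz orbT.
Qed.

Lemma omega_prodgen s : all (fun a => 1 < a) s -> pairwise coprime s ->
  smallomega (\prod_(x <- s) x) = sumn (map smallomega s).
Proof.
elim: s => [|x s IH] /=; first by rewrite big_nil omega1.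
move=> /andP[x1 hs] /andP[cx pw]; rewrite big_cons omegaM ?IH //.
- exact: ltnW.
- exact: prod_pos.
- rewrite coprime_sym; apply: coprime_prodl => z hz; rewrite coprime_sym.
  by move/allP: cx; apply.
Qed.

Lemma omega_pos a : 1 < a -> 0 < smallomega a.
Proof.
move=> a1; rewrite /smallomega lt0n size_eq0 primes_eq0 -leqNgt; exact: a1.
Qed.

Lemma sumn_ones (f : nat -> nat) (t : seq nat) : all (fun x => f x == 1) t -> sumn (map f t) = size t.
Proof. by elim: t => [//|x t IH] /= /andP[/eqP -> /IH ->]. Qed.

Lemma part1 n : 0 < n -> SG is_factorization n = bigOmega n - 1.
Proof.
apply: (SG_eq is_factorization (fun x => bigOmega x - 1)) => //.
- move=> m s m0 hf; case/and4P: hf => hsz hall _ /eqP hp.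
  have hs := sum_sub1 bigOmega s (fun x hx => Omega_pos x (allP hall x hx)).
  have ho : bigOmega m = sumn (map bigOmega s) by rewrite -hp Omega_prodgen.
  move: hs; rewrite -ho => hs0; lia.
- move=> m j m0 hj.
  have [L [hL hp]] := prime_list m m0.
  have hs : size L = bigOmega m by rewrite -hp Omega_prod.
  apply: (build _ _ _ _ L) => //.
  + apply/allP => x hx; have px : prime x by move/allP: hL; apply.
    by rewrite prime_gt1 // Omega_prime.
  + rewrite Omega_prod ?size_take; last by apply/allP => x /mem_take; move/allP: hL; apply.
    by have -> : j.+1 < size L by lia.
Qed.

Lemma pwL n : pairwise coprime [seq p ^ logn p n | p <- primes n].
Proof.
rewrite pairwise_map.
have := sorted_primes n; rewrite sorted_pairwise; last exact: ltn_trans.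
apply: (sub_in_pairwise (P := mem (primes n))); last by apply/allP.
move=> p q hp hq /= pq.
rewrite coprime_pexpl ?logn_gt0 // coprime_pexpr ?logn_gt0 //.
move: hp hq; rewrite !mem_primes => /and3P[pp _ _] /and3P[pq' _ _].
by rewrite prime_coprime // dvdn_prime2 // ltn_eqF.
Qed.

Lemma part2 n : 0 < n -> SG is_coprime_factorization n = smallomega n - 1.
Proof.
apply: (SG_eq is_coprime_factorization (fun x => smallomega x - 1)).
- by move=> m s /andP[].
- move=> m s m0 /andP[hf pw]; case/and4P: hf => hsz hall _ /eqP hp.
  have hs := sum_sub1 smallomega s (fun x hx => omega_pos x (allP hall x hx)).
  have ho : smallomega m = sumn (map smallomega s) by rewrite -hp omega_prodgen.
  move: hs; rewrite -ho => hs0; lia.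
- move=> m j m0 hj.
  set L := [seq p ^ logn p m | p <- primes m].
  have hp : \prod_(x <- L) x = m.
    by rewrite [RHS](prod_prime_decomp m0) prime_decompE !big_map.
  have hs : size L = smallomega m by rewrite size_map.
  have hall : all (fun x => (1 < x) && (smallomega x == 1)) L.
    apply/allP => x /mapP[p hpm ->].
    have k0 : 0 < logn p m by rewrite logn_gt0.
    move: (hpm); rewrite mem_primes => /and3P[pp _ _].
    rewrite -(exp1n (logn p m)) ltn_exp2r // prime_gt1 //=.
    by rewrite /smallomega exp1n primesX // primes_prime.
  have pw := pwL m; rewrite -/L in pw.
  move: (pw); rewrite -(cat_take_drop j.+1 L) pairwise_cat => /and3P[ar pt pd].
  apply: (build _ _ _ _ L) => //.
  + have htk : all (fun x => (1 < x) && (smallomega x == 1)) (take j.+1 L).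
      by apply/allP => x /mem_take hx; move/allP: hall; apply.
    rewrite omega_prodgen //; last by apply/allP => x hx; move/allP: htk => /(_ x hx) /andP[].
    rewrite sumn_ones ?size_take; last by apply/allP => x hx; move/allP: htk => /(_ x hx) /andP[].
    by have -> : j.+1 < size L by lia.
  + move=> s ps hf; rewrite /is_coprime_factorization hf /=.
    move: ps; rewrite perm_sym => ps.
    apply: (pairwise_perm _ coprime _ _ coprime_sym ps).
    rewrite pairwise_cons pd andbT; apply/allP => y hy.
    apply: coprime_prodl => x hx; by move/allrelP: ar; apply.
Qed.

Theorem mainTheorem13 (n : nat) (hn : 2 <= n) :
  SG is_factorization n = bigOmega n - 1 /\
  SG is_coprime_factorization n = smallomega n - 1.
Proof. by split; [apply: part1 | apply: part2]; apply: ltnW. Qed.
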